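(* Let $b\ge 1$ and let $r=(r_1,r_2,\ldots,r_\ell)$ be an ordered partition of $b$. The number of ways that $r$ can have an ordered partition of $b$ embedded inside it (counting nontrivial embeddings of every ordered partition $q$ of $b$ into $r$, together with the one trivial embedding of $r$ into itself) is \[ \prod_{i=1}^{\ell}(r_i+1). \] Equivalently, this is the number of cards for $b$ balls whose right partition is $r$.
   Context: For an integer $b\ge 0$, an ordered partition of $b$ is a finite sequence $(q_1,\ldots,q_k)$ of positive integers summing to $b$ (for $b=0$ the only one is the empty sequence). An ordered partition $(q_1,\ldots,q_k)$ with $k\ge1$ is nontrivially embedded into an ordered partition $(r_1,\ldots,r_\ell)$ by a choice of indices $1\le i_2<i_3<\cdots<i_k\le \ell$ with $q_j\le r_{i_j}$ for $2\le j\le k$; different index tuples count as different embeddings. The trivial embedding of $q$ into $r$ exists only when $q=r$. A card for $b$ balls is either (i) a trivial card, given by an ordered partition $q$ of $b$, whose left and right partitions are both $q$; or (ii) a throw card, given by ordered partitions $q=(q_1,\ldots,q_k)$ ($k\ge1$) and $r=(r_1,\ldots,r_\ell)$ of $b$ together with a nontrivial embedding $(i_2,\ldots,i_k)$ of $q$ into $r$; its left partition is $q$ and its right partition is $r$. Different index tuples give different cards, and a throw card is distinct from the trivial card even when $q=r$. *)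

(* Defs.v *)
From mathcomp Require Import all_boot.
Set Implicit Arguments. Unset Strict Implicit. Unset Printing Implicit Defensive.

Definition is_opart (b : nat) (q : seq nat) : bool :=
  all (fun x => 0 < x) q && (sumn q == b).

(* The index tuple (i_2,...,i_k) is given 0-based as s (size k-1, entries in 'I_(size r)):
   s_j corresponds to i_{j+2} - 1.  Conditions: strictly increasing, and
   q_{j+2} <= r_{i_{j+2}}, i.e. nth 0 q j.+1 <= nth 0 r (s_j). *)
Definition is_nt_embedding (q r : seq nat) (s : seq nat) : bool :=
  [&& 0 < size q, size s == (size q).-1, all (fun i => i < size r) s,
      sorted ltn s &
      all (fun j => nth 0 q j.+1 <= nth 0 r (nth 0 s j)) (iota 0 (size s))].

(* Every ordered partition of b (b >= 1) has length k <= b and parts <= b, hence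
   is represented by some k.-tuple of 'I_b.+1 with k < b.+1. *)

Definition num_throw_cards (b : nat) (r : seq nat) : nat :=
  \sum_(k < b.+1)
    #|[set qs : k.-tuple 'I_b.+1 * (k.-1).-tuple 'I_(size r) |
        is_opart b (map val qs.1) &&
        is_nt_embedding (map val qs.1) r (map val qs.2)]|.

(* Number of trivial cards for b balls whose right partition is r
   (trivial card q has right partition q). *)
Definition num_trivial_cards (b : nat) (r : seq nat) : nat :=
  \sum_(k < b.+1)
    #|[set q : k.-tuple 'I_b.+1 | is_opart b (map val q) && (map val q == r)]|.

Definition num_cards_right (b : nat) (r : seq nat) : nat :=
  num_throw_cards b r + num_trivial_cards b r.

(* Main.v *)
Require Import Defs.
From mathcomp Require Import all_boot zify.
Set Implicit Arguments. Unset Strict Implicit. Unset Printing Implicit Defensive.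

Lemma all2_leqP (v r : seq nat) :
  reflect (size v = size r /\ forall i, i < size r -> nth 0 v i <= nth 0 r i)
          (all2 leq v r).
Proof.
elim: v r => [|x v IH] [|y r] /=.
- by constructor; split.
- by constructor; case.
- by constructor; case.
- apply: (iffP andP).
  + case=> Hxy /IH [Hs Hn]; split; first by rewrite Hs.
    by case=> [|i] //= /Hn.
  + case=> [[Hs] Hn]; split; first exact: (Hn 0).
    by apply/IH; split=> // i Hi; exact: (Hn i.+1).
Qed.

Fixpoint allv (r : seq nat) : seq (seq nat) :=
  if r is x :: r' then [seq a :: v | a <- iota 0 x.+1, v <- allv r'] else [:: [::]].

Lemma mem_allv r v : (v \in allv r) = all2 leq v r.
Proof.
elim: r v => [|x r IH]; first by case=> [|a v].
case=> [|a v].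
- by apply/negbTE/negP => /allpairsP [[b w] [_ _ ]].
- rewrite [all2 _ _ _]/=.
  apply/allpairsP/andP.
  + case=> -[b w] [Hb Hw [-> ->]].
    have {}Hw : w \in allv r := Hw; have : b \in iota 0 x.+1 := Hb; rewrite mem_iota add0n ltnS => {}Hb.
    by split=> //; rewrite -IH.
  + case=> Ha Hv; exists (a, v); split.
    * by have -> : ((a,v).1 \in iota 0 x.+1) = (a \in iota 0 x.+1) by []; rewrite mem_iota add0n ltnS.
    * by have -> : (v \in allv r) = _ := IH v.
    * by [].
Qed.

Lemma allv_uniq r : uniq (allv r).
Proof.
elim: r => [|x r IH] //.
change (uniq [seq a :: v | a <- iota 0 x.+1, v <- allv r]); apply: allpairs_uniq => //; first exact: iota_uniq.
by case=> a v [b w] _ _ /= [-> ->].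
Qed.

Lemma size_allv r : size (allv r) = \prod_(x <- r) (x + 1).
Proof.
elim: r => [|x r IH]; first by rewrite big_nil.
rewrite big_cons; change (size [seq a :: v | a <- iota 0 x.+1, v <- allv r] = (x + 1) * \prod_(j <- r) (j + 1)).
by rewrite size_allpairs size_iota IH addn1.
Qed.

Lemma sumn_le2 v r : all2 leq v r -> sumn v <= sumn r.
Proof.
elim: v r => [|x v IH] [|y r] //= /andP [H1 H2]; exact: leq_add H1 (IH _ H2).
Qed.

Lemma sumn_lt2 v r : all2 leq v r -> v != r -> sumn v < sumn r.
Proof.
elim: v r => [|x v IH] [|y r] //= /andP [H1 H2] Hne.
case: (eqVneq v r) => [Evr|Hvr].
- subst v; have Hxy : x != y by apply: contraNneq Hne => ->.
  by rewrite ltn_add2r ltn_neqAle Hxy H1.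
- have := IH _ H2 Hvr; lia.
Qed.

Lemma size_le_sumn s : all (fun x => 0 < x) s -> size s <= sumn s.
Proof. elim: s => [|x s IH] //= /andP [Hx Hs]; rewrite -add1n; exact: leq_add Hx (IH Hs). Qed.

Lemma sumn_filter_pos v : sumn [seq x <- v | 0 < x] = sumn v.
Proof. by elim: v => [|x v IH] //=; case: x => [|x] //=; rewrite IH. Qed.

Definition supp (v : seq nat) := [seq i <- iota 0 (size v) | 0 < nth 0 v i].
Definition vals (v : seq nat) := [seq nth 0 v i | i <- supp v].
Definition vof n (t s : seq nat) :=
  [seq (if i \in s then nth 0 t (index i s) else 0) | i <- iota 0 n].

Lemma vals_filter v : vals v = [seq x <- v | 0 < x].
Proof. by rewrite /vals /supp -[in RHS](mkseq_nth 0 v) /mkseq filter_map. Qed.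

Lemma sumn_vals v : sumn (vals v) = sumn v.
Proof. by rewrite vals_filter sumn_filter_pos. Qed.

Lemma vals_pos v : all (fun x => 0 < x) (vals v).
Proof. by rewrite vals_filter filter_all. Qed.

Lemma size_vals v : size (vals v) = size (supp v).
Proof. by rewrite size_map. Qed.

Lemma mem_supp v i : (i \in supp v) = (i < size v) && (0 < nth 0 v i).
Proof. by rewrite mem_filter mem_iota add0n andbC. Qed.

Lemma supp_sorted v : sorted ltn (supp v).
Proof. apply: sorted_filter; [exact: ltn_trans | exact: iota_ltn_sorted]. Qed.

Lemma supp_uniq v : uniq (supp v).
Proof. apply: (sorted_uniq ltn_trans ltnn); exact: supp_sorted. Qed.

Lemma size_vof n t s : size (vof n t s) = n.
Proof. by rewrite size_map size_iota. Qed.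

Lemma nth_vof n t s i : i < n ->
  nth 0 (vof n t s) i = if i \in s then nth 0 t (index i s) else 0.
Proof. by move=> Hi; rewrite (nth_map 0) ?size_iota // nth_iota. Qed.

Lemma vof_supp v : vof (size v) (vals v) (supp v) = v.
Proof.
apply: (eq_from_nth (x0:=0)); first by rewrite size_vof.
move=> i; rewrite size_vof => Hi; rewrite nth_vof //.
case: ifP => H.
- by rewrite /vals (nth_map 0) ?index_mem // nth_index.
- move: H; rewrite mem_supp Hi /=; by case: (nth 0 v i).
Qed.

Section Fwd.
Variables (n : nat) (t s : seq nat).
Hypotheses (Ht : all (fun x => 0 < x) t) (Hs : size s = size t)
  (Hsn : all (fun i => i < n) s) (Hso : sorted ltn s).

Lemma supp_vof : supp (vof n t s) = s.
Proof.
apply: (irr_sorted_eq ltn_trans ltnn (supp_sorted _) Hso) => i.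
rewrite mem_supp size_vof.
case: (ltnP i n) => Hi /=.
- rewrite nth_vof //; case: ifP => H //.
  by apply: (all_nthP 0 Ht); rewrite -Hs index_mem.
- apply/esym/negbTE/negP => H; move: (allP Hsn i H); by rewrite ltnNge Hi.
Qed.

Lemma vals_vof : vals (vof n t s) = t.
Proof.
have Hu : uniq s by apply: (sorted_uniq ltn_trans ltnn).
rewrite /vals supp_vof; apply: (eq_from_nth (x0:=0)); first by rewrite size_map.
move=> j; rewrite size_map => Hj; rewrite (nth_map 0) //.
rewrite nth_vof; last by apply: (allP Hsn); exact: mem_nth.
by rewrite mem_nth // index_uniq.
Qed.
End Fwd.

Section Main.
Variables (b : nat) (r : seq nat).
Hypothesis Hr : is_opart b r.

Lemma throw_fwd q s : is_opart b q -> is_nt_embedding q r s ->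
  let v := vof (size r) (behead q) s in
  [/\ all2 leq v r, v != r, (size (supp v)).+1 = size q,
      q = (b - sumn v) :: vals v & s = supp v].
Proof.
move: Hr => /andP [Hrp /eqP Hrs].
case: q => [|h t]; first by rewrite /is_nt_embedding.
move=> /andP [/= /andP [Hh Ht] /eqP Hsum].
move=> /and5P [_ /eqP /= Hs Hsn Hso Hnth] /=.
have Hsupp := supp_vof Ht Hs Hsn Hso.
have Hvals := vals_vof Ht Hs Hsn Hso.
have Hsv : sumn (vof (size r) t s) = sumn t by rewrite -sumn_vals Hvals.
split.
- apply/all2_leqP; split; first by rewrite size_vof.
  move=> i Hi; rewrite nth_vof //; case: ifP => // His.
  have Hidx : index i s < size s by rewrite index_mem.
  have := allP Hnth (index i s); rewrite mem_iota add0n Hidx => /(_ isT) /=.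
  by rewrite nth_index.
- apply/negP => /eqP Hv; move: Hsv; rewrite Hv Hrs -Hsum; lia.
- by rewrite Hsupp Hs.
- by rewrite Hvals Hsv -Hsum addnK.
- by rewrite Hsupp.
Qed.

Lemma throw_bwd v : all2 leq v r -> v != r ->
  [/\ is_opart b ((b - sumn v) :: vals v),
      is_nt_embedding ((b - sumn v) :: vals v) r (supp v),
      vof (size r) (vals v) (supp v) = v
    & (size (supp v)).+1 = size ((b - sumn v) :: vals v)].
Proof.
move=> Hle Hne.
move: Hr => /andP [Hrp /eqP Hrs].
have Hlt := sumn_lt2 Hle Hne; rewrite Hrs in Hlt.
have [Hsz Hn] := all2_leqP _ _ Hle.
split.
- rewrite /is_opart /= vals_pos sumn_vals subn_gt0 Hlt /=.
  apply/eqP; rewrite subnK //; exact: ltnW.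
- rewrite /is_nt_embedding /= size_vals eqxx supp_sorted /=.
  apply/andP; split.
  + by apply/allP => i; rewrite mem_supp -Hsz => /andP [].
  + apply/allP => j; rewrite mem_iota add0n /= => Hj.
    rewrite /vals (nth_map 0) //; apply: Hn.
    have : nth 0 (supp v) j \in supp v by exact: mem_nth.
    by rewrite mem_supp -Hsz => /andP [].
- by rewrite -Hsz vof_supp.
- by rewrite /= size_vals.
Qed.

End Main.

Lemma card_via (T : finType) (P : pred T) (F : T -> seq nat) (W : seq (seq nat)) :
  {in P &, injective F} -> uniq W -> (forall x, P x -> F x \in W) ->
  (forall w, w \in W -> exists2 x, P x & F x = w) -> #|[set x | P x]| = size W.
Proof.
move=> Hinj HW Hin Hsurj.
rewrite cardsE cardE -(size_map F); apply: perm_size; apply: uniq_perm => //.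
- rewrite map_inj_in_uniq ?enum_uniq // => x y; rewrite !mem_enum; exact: Hinj.
- move=> w; apply/mapP/idP => [[x Hx ->]|/Hsurj [x Hx <-]].
  + by apply: Hin; rewrite mem_enum in Hx.
  + by exists x => //; rewrite mem_enum.
Qed.

Lemma sum_count_size (g : seq nat -> nat) n W : all (fun w => g w < n) W ->
  \sum_(k < n) size [seq w <- W | g w == k] = size W.
Proof.
elim: W => [|w W IH] /=; first by rewrite big1.
move=> /andP [Hg /IH {}IH].
rewrite (eq_bigr (fun k : 'I_n => nat_of_bool (g w == k) + size [seq x <- W | g x == k])); last first.
  by move=> k _ /=; case: (g w == k).
rewrite big_split /= IH -add1n; congr (_ + _).
rewrite (bigD1 (Ordinal Hg)) //= eqxx big1 // => k Hk.
apply/eqP; rewrite eqb0; apply: contra Hk => /eqP H; apply/eqP/val_inj; by rewrite /= H.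
Qed.

Lemma lift_seq n (s : seq nat) : all (fun i => i < n) s -> exists t : seq 'I_n, map val t = s.
Proof.
elim: s => [|x s IH] /=; first by exists [::].
by move=> /andP [Hx /IH [t Ht]]; exists (Ordinal Hx :: t); rewrite /= Ht.
Qed.

Lemma le_sumn (s : seq nat) x : x \in s -> x <= sumn s.
Proof.
elim: s => [|y s IH] //=; rewrite in_cons => /orP [/eqP ->|/IH H]; first exact: leq_addr.
exact: leq_trans H (leq_addl _ _).
Qed.

Lemma opart_bound b q : is_opart b q -> all (fun i => i < b.+1) q.
Proof. by move=> /andP [_ /eqP <-]; apply/allP => x /le_sumn. Qed.

Lemma trivial_k b r (k : nat) : is_opart b r ->
  #|[set q : k.-tuple 'I_b.+1 | is_opart b (map val q) && (map val q == r)]|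
  = size [seq x <- [:: r] | size x == k].
Proof.
move=> Hr.
apply: (card_via (F := fun q : k.-tuple 'I_b.+1 => map val q)).
- move=> x y _ _ H; apply: val_inj.
  exact: (inj_map val_inj H).
- by rewrite /=; case: (size r == k).
- move=> x /andP [_ /eqP <-]; by rewrite /= size_map size_tuple eqxx mem_seq1.
- move=> w; rewrite /=; case: eqP => Hk //; rewrite mem_seq1 => /eqP ->.
  have [t Ht] := lift_seq (opart_bound Hr).
  have Hs : size t == k by rewrite -Hk -Ht size_map.
  exists (Tuple Hs); last by [].
  by rewrite /= Ht Hr eqxx.
Qed.

Lemma throw_k b r (k : nat) : is_opart b r ->
  #|[set qs : k.-tuple 'I_b.+1 * (k.-1).-tuple 'I_(size r) |
        is_opart b (map val qs.1) &&
        is_nt_embedding (map val qs.1) r (map val qs.2)]|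
  = size [seq v <- [seq v <- allv r | v != r] | (size (supp v)).+1 == k].
Proof.
move=> Hr.
apply: (card_via (F := fun qs : k.-tuple 'I_b.+1 * (k.-1).-tuple 'I_(size r) =>
   vof (size r) (behead (map val qs.1)) (map val qs.2))).
- move=> [x1 x2] [y1 y2] /andP [Hx1 Hx2] /andP [Hy1 Hy2] /= H.
  have [_ _ _ Ex1 Ex2] := throw_fwd Hr Hx1 Hx2.
  have [_ _ _ Ey1 Ey2] := throw_fwd Hr Hy1 Hy2.
  rewrite H -Ey1 in Ex1; rewrite H -Ey2 in Ex2.
  by congr pair; apply: val_inj; apply: (inj_map val_inj).
- by apply: filter_uniq; apply: filter_uniq; exact: allv_uniq.
- move=> [x1 x2] /andP [Hx1 Hx2] /=.
  have [Hle Hne Hsz _ _] := throw_fwd Hr Hx1 Hx2.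
  by rewrite !mem_filter Hsz size_map size_tuple eqxx Hne mem_allv Hle.
- move=> w; rewrite !mem_filter mem_allv => /and3P [/eqP Hk Hne Hle].
  have [Hq He Hv Hsz] := throw_bwd Hr Hle Hne.
  have [t1 Ht1] := lift_seq (opart_bound Hq).
  have Hsn : all (fun i => i < size r) (supp w) by case/and5P: He.
  have [t2 Ht2] := lift_seq Hsn.
  have Hs1 : size t1 == k by rewrite -Hk Hsz -Ht1 size_map.
  have Hs2 : size t2 == k.-1 by rewrite -Hk -Ht2 size_map.
  exists (Tuple Hs1, Tuple Hs2) => /=.
  + by rewrite Ht1 Ht2 Hq He.
  + by rewrite Ht1 Ht2 /= Hv.
Qed.

Theorem lemma2 (b : nat) (r : seq nat) :
  1 <= b -> is_opart b r ->
  num_cards_right b r = \prod_(x <- r) (x + 1).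
Proof.
move=> Hb Hr.
rewrite /num_cards_right /num_throw_cards /num_trivial_cards.
rewrite (eq_bigr (fun k : 'I_b.+1 => size [seq v <- [seq v <- allv r | v != r] | (size (supp v)).+1 == k])); last by move=> k _; exact: throw_k.
rewrite [X in _ + X](eq_bigr (fun k : 'I_b.+1 => size [seq x <- [:: r] | size x == k])); last by move=> k _; exact: trivial_k.
rewrite !sum_count_size.
- rewrite -size_allv /= size_filter.
  have := count_predC (pred1 r) (allv r).
  rewrite count_uniq_mem ?allv_uniq // mem_allv.
  have -> : all2 leq r r by apply/all2_leqP; split.
  move=> <-; rewrite addnC; congr (_ + _); apply: eq_count => x /=; by [].
- move: Hr => /andP [Hp /eqP Hs] /=; rewrite andbT ltnS -Hs; exact: size_le_sumn.
- apply/allP => w; rewrite mem_filter mem_allv => /andP [Hne Hle].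
  have := sumn_lt2 Hle Hne; move: Hr => /andP [_ /eqP ->] => Hlt.
  rewrite ltnS; apply: leq_trans _ Hlt.
  by rewrite -size_vals -(sumn_vals w); apply: size_le_sumn; exact: vals_pos.
Qed.
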